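(* For every integer $n\ge1$, $$\int_2^\infty F_n(w)\,dw\le n.$$
   Context: For $w>0$ and integer $n\ge1$ let $a_n(w)=\sum_{j=0}^n w^j$, $b_n(w)=\sum_{j=1}^n jw^j$, $c_n(w)=\sum_{j=0}^n j^2w^j$, and $$F_n(w)=\frac{1}{2\sqrt{w}}\sqrt{\frac{c_n(w)}{a_n(w)}}\sqrt{\frac{a_n(w)c_n(w)-b_n(w)^2}{w\,a_n(w)^2}}.$$ *)

(* Defs.v *)
From mathcomp Require Import all_boot all_order all_algebra.
From mathcomp Require Import all_classical all_reals all_analysis.
Set Implicit Arguments. Unset Strict Implicit. Unset Printing Implicit Defensive.
Import Order.TTheory GRing.Theory Num.Theory.
Local Open Scope ring_scope.

Section Defs.
Variable R : realType.

Definition aF (n : nat) (w : R) : R := \sum_(0 <= j < n.+1) w ^+ j.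
Definition bF (n : nat) (w : R) : R := \sum_(1 <= j < n.+1) j%:R * w ^+ j.
Definition cF (n : nat) (w : R) : R := \sum_(0 <= j < n.+1) (j%:R) ^+ 2 * w ^+ j.

Definition FF (n : nat) (w : R) : R :=
  (2 * Num.sqrt w)^-1 * Num.sqrt (cF n w / aF n w) *
  Num.sqrt ((aF n w * cF n w - bF n w ^+ 2) / (w * aF n w ^+ 2)).
End Defs.

(* Main.v *)
Require Import Defs.
From mathcomp Require Import all_boot all_order all_algebra.
From mathcomp Require Import all_classical all_reals all_analysis.
From mathcomp Require Import ring lra measurable_realfun ftc.
Import Order.TTheory GRing.Theory Num.Theory numFieldNormedType.Exports.
Local Open Scope classical_set_scope.
Local Open Scope ring_scope.

Section Alg.
Variable R : realType.
Implicit Types w : R.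

Lemma aS n w : aF n.+1 w = aF n w + w ^+ n.+1.
Proof. by rewrite /aF big_nat_recr. Qed.
Lemma bS n w : bF n.+1 w = bF n w + n.+1%:R * w ^+ n.+1.
Proof. by rewrite /bF big_nat_recr. Qed.
Lemma cS n w : cF n.+1 w = cF n w + n.+1%:R ^+ 2 * w ^+ n.+1.
Proof. by rewrite /cF big_nat_recr. Qed.

Lemma aE n w : w != 1 -> aF n w = (w ^+ n.+1 - 1) / (w - 1).
Proof.
move=> w1; have w10 : w - 1 != 0 by rewrite subr_eq0.
elim: n => [|n IH]; first by rewrite /aF big_nat1 expr0 expr1 divff.
rewrite aS IH [w ^+ n.+2]exprS; field; exact: w10.
Qed.

Lemma bE n w : w != 1 ->
  bF n w = (n%:R * w ^+ n.+1 * w - n.+1%:R * w ^+ n.+1 + w) / (w - 1) ^+ 2.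
Proof.
move=> w1; have w10 : w - 1 != 0 by rewrite subr_eq0.
elim: n => [|n IH].
  rewrite /bF big_geq // expr1; field; exact: w10.
rewrite bS IH [w ^+ n.+2]exprS -[n.+2]addn1 -[n.+1]addn1 !natrD; field; exact: w10.
Qed.

Definition XF n w := n%:R ^+ 2 * aF n w - 2 * n%:R * bF n w + cF n w.

Lemma XS n w : XF n.+1 w = XF n w + (2 * n%:R + 1) * aF n w - 2 * bF n w.
Proof. rewrite /XF aS bS cS -[n.+1]addn1 natrD; ring. Qed.

Lemma XE n w : w != 1 ->
  XF n w = (w ^+ n.+1 * (w + 1) - (n.+1%:R ^+ 2 * w ^+ 2
     - (2 * n%:R ^+ 2 + 2 * n%:R - 1) * w + n%:R ^+ 2)) / (w - 1) ^+ 3.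
Proof.
move=> w1; have w10 : w - 1 != 0 by rewrite subr_eq0.
elim: n => [|n IH].
  rewrite /XF /cF big_nat1 expr1; field; exact: w10.
rewrite XS IH aE // bE // [w ^+ n.+2]exprS -[n.+2]addn1 -[n.+1]addn1 !natrD; field; exact: w10.
Qed.


Lemma key n w : (1 <= n)%N -> 2 <= w ->
  (aF n w * cF n w - bF n w ^+ 2) * (w - 1) ^+ 3 <= w ^+ 2 * aF n w ^+ 2.
Proof.
move=> n1 w2.
have w1 : w != 1 by apply/eqP => h; rewrite h in w2; lra.
have hw1 : 0 < w - 1 by lra.
have w10 : w - 1 != 0 by rewrite gt_eqF.
set W := w ^+ n.+1.
have hW : w ^+ 2 <= W.
  have -> : W = w ^+ (2 + n.-1) by rewrite /W; case: n n1 {W}.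
  rewrite exprD ler_peMr ?exprn_ge0 ?exprn_ege1 //; lra.
have ha : aF n w = (W - 1) / (w - 1) by rewrite aE.
set N := n%:R : R.
have N1 : 1 <= N by rewrite /N ler1n.
set P := n.+1%:R ^+ 2 * w ^+ 2 - (2 * N ^+ 2 + 2 * N - 1) * w + N ^+ 2.
have hX : (w - 1) ^+ 3 * XF n w = W * (w + 1) - P.
  by rewrite XE // /P /W /N; field.
have hP : 0 <= P.
  rewrite /P -[n.+1]addn1 natrD -/N.
  have : 0 <= (N + 1) ^+ 2 * w * (w - 2).
    by rewrite mulr_ge0 ?mulr_ge0 ?sqr_ge0 //; lra.
  nra.
set a := aF n w.
have apos : 0 < a.
  rewrite /a ha divr_gt0 //; nra.
have h4 : W * (w + 1) <= w ^+ 2 * a.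
  rewrite /a ha mulrA ler_pdivlMr //; nra.
have e : a * cF n w - bF n w ^+ 2 = a * XF n w - (N * a - bF n w) ^+ 2.
  by rewrite /XF -/a -/N; ring.
rewrite e.
have -> : (a * XF n w - (N * a - bF n w) ^+ 2) * (w - 1) ^+ 3 =
  a * ((w - 1) ^+ 3 * XF n w) - (N * a - bF n w) ^+ 2 * (w - 1) ^+ 3 by ring.
rewrite hX.
have h5 : 0 <= (N * a - bF n w) ^+ 2 * (w - 1) ^+ 3.
  by rewrite mulr_ge0 ?sqr_ge0 ?exprn_ge0 // ltW.
have h6 : 0 <= a * P by rewrite mulr_ge0 // ltW.
have h7 : a * (W * (w + 1)) <= a * (w ^+ 2 * a) by rewrite ler_pM2l.
nra.
Qed.

Lemma cle n w : 0 <= w -> cF n w <= n%:R ^+ 2 * aF n w.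
Proof.
move=> w0; rewrite /cF /aF mulr_sumr; apply: ler_sum_nat => j /andP[_ hj].
rewrite ler_wpM2r ?exprn_ge0 // -!natrX ler_nat expnS expn1 [(n ^ 2)%N]expnS expn1; exact: leq_mul.
Qed.


Definition gg n w := n%:R * ((Num.sqrt (w - 1))^-2 * (2 * Num.sqrt (w - 1))^-1).

Lemma FF_le n w : (1 <= n)%N -> 2 <= w -> FF n w <= gg n w.
Proof.
move=> n1 w2.
have hk := @key n w n1 w2.
have w0 : 0 < w by lra.
have hw1 : 0 < w - 1 by lra.
have apos : 0 < aF n w.
  rewrite aE; last by apply/eqP => h; rewrite h in w2; lra.
  rewrite divr_gt0 // subr_gt0 exprn_egt1 //; lra.
have hc := @cle n w (ltW w0).
set a := aF n w in apos hk hc *; set b := bF n w in hk *; set c := cF n w in hk hc *.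
set N := n%:R : R.
have N0 : 0 <= N by rewrite /N ler0n.
set s := Num.sqrt (w - 1).
have s0 : 0 < s by rewrite sqrtr_gt0.
have sw0 : 0 < Num.sqrt w by rewrite sqrtr_gt0.
have s1 : Num.sqrt (c / a) <= N.
  apply: le_trans (ler_wsqrtr (_ : c / a <= N ^+ 2)) _.
    by rewrite ler_pdivrMr.
  by rewrite sqrtr_sqr ger0_norm.
have s2 : Num.sqrt ((a * c - b ^+ 2) / (w * a ^+ 2)) <= Num.sqrt w / s ^+ 3.
  apply: le_trans (ler_wsqrtr (_ : _ <= (Num.sqrt w / s ^+ 3) ^+ 2)) _; last first.
    by rewrite sqrtr_sqr ger0_norm // divr_ge0 ?exprn_ge0 // ltW.
  rewrite expr_div_n sqr_sqrtr ?(ltW w0) // -exprM mulnC exprM sqr_sqrtr ?(ltW hw1) //.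
  rewrite -subr_ge0.
  have -> : w / (w - 1) ^+ 3 - (a * c - b ^+ 2) / (w * a ^+ 2) =
     (w ^+ 2 * a ^+ 2 - (a * c - b ^+ 2) * (w - 1) ^+ 3) / ((w - 1) ^+ 3 * (w * a ^+ 2)).
    field; rewrite ?gt_eqF //.
  by rewrite divr_ge0 ?subr_ge0 // mulr_ge0 ?exprn_ge0 ?mulr_ge0 // ltW.
rewrite /FF -/a -/b -/c.
apply: le_trans (_ : (2 * Num.sqrt w)^-1 * N * (Num.sqrt w / s ^+ 3) <= _).
  apply: ler_pM; rewrite ?sqrtr_ge0 ?mulr_ge0 ?invr_ge0 ?mulr_ge0 ?sqrtr_ge0 //.
  by apply: ler_pM; rewrite ?sqrtr_ge0 ?invr_ge0 ?mulr_ge0 ?sqrtr_ge0.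
rewrite /gg -/N -/s le_eqVlt; apply/orP; left; apply/eqP.
field; rewrite ?gt_eqF //.
Qed.


Lemma contM (f g : R -> R) (x : R) : {for x, continuous f} -> {for x, continuous g} ->
  {for x, continuous (fun y => f y * g y)}.
Proof. exact: continuousM. Qed.
Lemma contD (f g : R -> R) (x : R) : {for x, continuous f} -> {for x, continuous g} ->
  {for x, continuous (fun y => f y + g y)}.
Proof. exact: continuousD. Qed.
Lemma contB (f g : R -> R) (x : R) : {for x, continuous f} -> {for x, continuous g} ->
  {for x, continuous (fun y => f y - g y)}.
Proof. exact: continuousB. Qed.
Lemma contV (f : R -> R) (x : R) : f x != 0 -> {for x, continuous f} ->
  {for x, continuous (fun y => (f y)^-1)}.
Proof. exact: continuousV. Qed.
Lemma contS (f : R -> R) (x : R) : {for x, continuous f} ->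
  {for x, continuous (fun y => Num.sqrt (f y))}.
Proof. move=> cf; apply: (continuous_comp cf); exact: sqrt_continuous. Qed.
Lemma contC (c x : R) : {for x, continuous (fun _ : R => c)}.
Proof. exact: cst_continuous. Qed.
Lemma contX n (x : R) : {for x, continuous (fun y : R => y ^+ n)}.
Proof. exact: exprn_continuous. Qed.
Lemma contP (f : R -> R) k (x : R) : {for x, continuous f} ->
  {for x, continuous (fun y => f y ^+ k)}.
Proof. move=> cf; exact: (continuous_comp cf (@exprn_continuous R k (f x))). Qed.
Lemma contI (x : R) : {for x, continuous (fun y : R => y)}.
Proof. exact: cvg_id. Qed.
Lemma contSum (s : seq nat) (F : nat -> R -> R) (x : R) :
  (forall j, {for x, continuous (F j)}) ->
  {for x, continuous (fun y => \sum_(j <- s) F j y)}.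
Proof.
move=> cF; elim: s => [|j s IH].
  have -> : (fun y => \sum_(j <- [::]) F j y) = (fun _ => 0).
    by apply/funext => y; rewrite big_nil.
  exact: contC.
have -> : (fun y => \sum_(i <- j :: s) F i y) = (fun y => F j y + \sum_(i <- s) F i y).
  by apply/funext => y; rewrite big_cons.
exact: contD.
Qed.

Lemma contA n (x : R) : {for x, continuous (aF n)}.
Proof. apply: contSum => j; exact: contX. Qed.
Lemma contBF n (x : R) : {for x, continuous (bF n)}.
Proof. apply: contSum => j; apply: contM; [exact: contC|exact: contX]. Qed.
Lemma contCF n (x : R) : {for x, continuous (cF n)}.
Proof. apply: contSum => j; apply: contM; [exact: contC|exact: contX]. Qed.

Lemma aF_gt0 n w : 0 < w -> 0 < aF n w.
Proof.
move=> w0; rewrite /aF big_nat_recl // expr0 ltr_pwDl //.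
by apply: sumr_ge0 => j _; rewrite exprn_ge0 // ltW.
Qed.

Lemma contFF n (x : R) : 0 < x -> {for x, continuous (FF n)}.
Proof.
move=> x0; have a0 := @aF_gt0 n x x0.
apply: contM; first apply: contM.
- apply: contV; first by rewrite mulf_neq0 // gt_eqF // sqrtr_gt0.
  apply: contM; [exact: contC| apply: contS; exact: contI].
- apply: contS; apply: contM; first exact: contCF.
  apply: contV; [by rewrite gt_eqF| exact: contA].
- apply: contS; apply: contM.
    apply: contB; first (apply: contM; [exact: contA|exact: contCF]).
    apply: contP; exact: contBF.
  apply: contV.
    by rewrite mulf_neq0 // gt_eqF // exprn_gt0.
  apply: contM; [exact: contI| apply: contP; exact: contA].
Qed.


Definition GG (n : nat) (y : R) := - (n%:R * (Num.sqrt (y - 1))^-1).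
Lemma GG_der n (x : R) : 1 < x ->
  is_derive x 1 (GG n) (n%:R * ((Num.sqrt (x - 1))^-2 * (2 * Num.sqrt (x - 1))^-1)).
Proof.
move=> x1.
have hs : is_derive x 1 (fun y : R => y - 1) 1.
  apply: is_derive_eq (is_deriveB (is_derive_id x 1) (is_derive_cst (1 : R) x 1)) _.
  by rewrite subr0.
have hsq : is_derive x 1 (fun y => Num.sqrt (y - 1)) ((2 * Num.sqrt (x - 1))^-1 * 1).
  apply: (@is_derive1_comp _ Num.sqrt (fun y : R => y - 1)) => //.
  apply: is_derive1_sqrt; lra.
have s0 : Num.sqrt (x - 1) != 0 by rewrite gt_eqF // sqrtr_gt0; lra.
have hinv := @is_deriveV R (fun y : R => Num.sqrt (y - 1)) x _ 1 s0 hsq.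
have hZ := is_deriveZ (n%:R) hinv.
have hN := is_deriveN hZ.
apply: is_derive_eq hN _.
rewrite /GRing.scale /=; ring.
Qed.


Lemma contGG n (x : R) : 1 < x -> {for x, continuous (GG n)}.
Proof.
move=> x1; apply: continuousN; apply: contM; first exact: contC.
apply: contV; first by rewrite gt_eqF // sqrtr_gt0; lra.
apply: contS; apply: contB; [exact: contI|exact: contC].
Qed.

Lemma contgg n (x : R) : 1 < x -> {for x, continuous (gg n)}.
Proof.
move=> x1; have s0 : Num.sqrt (x - 1) != 0 by rewrite gt_eqF // sqrtr_gt0; lra.
apply: contM; first exact: contC.
have cs : {for x, continuous (fun y : R => Num.sqrt (y - 1))}.
  apply: contS; apply: contB; [exact: contI|exact: contC].
apply: contM.
  apply: contV; first by rewrite expf_neq0.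
  exact: contP.
apply: contV; first by rewrite mulf_neq0.
apply: contM; [exact: contC|exact: cs].
Qed.

Lemma gg_ge0 n (x : R) : 1 < x -> 0 <= gg n x.
Proof.
move=> x1; rewrite /gg mulr_ge0 ?ler0n // mulr_ge0 // invr_ge0 ?exprn_ge0 ?mulr_ge0 ?sqrtr_ge0 //.
Qed.

Lemma FF_ge0 n (x : R) : 0 <= FF n x.
Proof.
by rewrite /FF !mulr_ge0 ?invr_ge0 ?mulr_ge0 ?sqrtr_ge0.
Qed.

Lemma GG_cvg n : GG n x @[x --> +oo] --> (0 : R).
Proof.
apply/cvgrPdist_lt => e e0.
near=> x.
have xM : 1 + (n%:R / e) ^+ 2 < x.
  near: x; apply: nbhs_pinfty_gt; rewrite num_real //.
have x1 : 0 < x - 1.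
  have : 0 <= (n%:R / e) ^+ 2 by rewrite sqr_ge0.
  lra.
have s0 : 0 < Num.sqrt (x - 1) by rewrite sqrtr_gt0.
rewrite /GG sub0r opprK ger0_norm; last first.
  by rewrite mulr_ge0 ?ler0n // invr_ge0 ltW.
have hne : 0 <= n%:R / e by rewrite divr_ge0 ?ler0n // ltW.
have hs : n%:R / e < Num.sqrt (x - 1).
  rewrite -[X in X < _](@ger0_norm _ (n%:R / e)) // -sqrtr_sqr ltr_sqrt //; lra.
rewrite ltr_pdivrMr // in hs.
by rewrite ltr_pdivrMr // mulrC.
Unshelve. all: by end_near.
Qed.

End Alg.
Arguments gg {R}.
Arguments GG {R}.

Theorem lemma3p4 (R : realType) (n : nat) : (1 <= n)%N ->
  (\int[@lebesgue_measure R]_(w in `[2%R, +oo[) (FF n w)%:E <= (n%:R)%:E)%E.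
Proof.
move=> n1.
have sub : `[(2:R), +oo[%classic `<=` `](1:R), +oo[%classic.
  by move=> y; rewrite /= !in_itv /= !andbT => ?; lra.
have le1 : (\int[@lebesgue_measure R]_(w in `[2%R, +oo[) (FF n w)%:E <=
            \int[@lebesgue_measure R]_(w in `[2%R, +oo[) (gg n w)%:E)%E.
  apply: ge0_le_integral => //.
  - by move=> x _; rewrite lee_fin FF_ge0.
  - apply/measurable_EFinP; apply: (measurable_funS _ sub) => //.
    apply: open_continuous_measurable_fun; first exact: interval_open.
    move=> y; rewrite inE /= in_itv /= andbT => y1; apply: contFF; lra.
  - apply/measurable_EFinP; apply: (measurable_funS _ sub) => //.
    apply: open_continuous_measurable_fun; first exact: interval_open.
    move=> y; rewrite inE /= in_itv /= andbT => y1; exact: contgg.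
  - by move=> x; rewrite /= in_itv /= andbT => x2; rewrite lee_fin FF_le.
apply: (le_trans le1).
rewrite (@ge0_continuous_FTC2y R (gg n) (GG n) 2 0).
- rewrite /GG (_ : (2 : R) - 1 = 1); last by lra.
  rewrite sqrtr1 invr1 mulr1.
  by rewrite -EFinB lee_fin sub0r opprK.
- by move=> x x2; apply: gg_ge0; lra.
- apply: continuous_in_subspaceT => y; rewrite inE /= in_itv /= andbT => y2.
  apply: contgg; lra.
- exact: GG_cvg.
- move=> x x2; have x1 : 1 < x by lra.
  have [d _] := @GG_der R n x x1.
  exact: d.
- apply: cvg_at_right_filter; apply: contGG; lra.
- move=> x; rewrite in_itv /= andbT => x2.
  rewrite derive1E; apply: derive_val; apply: (@GG_der R n x); lra.
Qed.
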